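(* Let $\hat{\mathbf{P}}\in\mathbb{R}^{N\times N}$ be a matrix with nonnegative entries, columns summing to $1$, and $\hat{\mathbf{P}}\boldsymbol\mu=\boldsymbol\mu$, such that $\langle\hat{\mathbf{P}},\mathbf{P}\rangle_\mu\ge2\|\boldsymbol\mu\|^2$ and $c'\|\mathbf{P}\|_\mu^2\le\|\hat{\mathbf{P}}\|_\mu^2\le C'\|\mathbf{P}\|_\mu^2$ for constants $0<c'\le C'$. Let $\mathbf{V}=\theta\hat{\mathbf{P}}+(1-\theta)\boldsymbol\mu\mathbf{1}^\top$ for some $\theta\in(0,1)$. Then there are constants $c_1,c_2,c_3>0$ depending only on $C$ and $C'$ such that $$\alpha_V\in\Big[c_1\frac{\theta}{NK_P},\;c_2\theta\Big]\quad\text{and}\quad\|\boldsymbol\Delta_V\|_\mu^2\le c_3\theta^2K_P.$$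
   Context: $\boldsymbol\mu\in\mathbb{R}^N$ is a probability vector with $\mu_k\in[1/(CN),C/N]$ for all $k$, for a constant $C\ge1$. $\mathbf{P}\in\mathbb{R}^{N\times N}$ has nonnegative entries, columns summing to $1$, $\mathbf{P}\boldsymbol\mu=\boldsymbol\mu$, and satisfies $\|\mathbf{P}\|_\mu^2-\|\boldsymbol\mu\|^2\ge\|\boldsymbol\mu\|^2$. $\langle\mathbf{M},\mathbf{M}'\rangle_\mu=\operatorname{Tr}(\mathbf{M}\operatorname{diag}(\boldsymbol\mu)\mathbf{M}'^\top)$, $\|\mathbf{M}\|_\mu^2=\langle\mathbf{M},\mathbf{M}\rangle_\mu$; $\|\boldsymbol\mu\|$ Euclidean. $K_P=\|\mathbf{P}\|_\mu^2-\|\boldsymbol\mu\|^2$, $\alpha_V=(\langle\mathbf{V},\mathbf{P}\rangle_\mu-\|\boldsymbol\mu\|^2)/K_P$, $\boldsymbol\Delta_V=\mathbf{V}-\alpha_V\mathbf{P}-(1-\alpha_V)\boldsymbol\mu\mathbf{1}^\top$. *)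

(* Defs.v *)
From mathcomp Require Import all_boot all_order all_algebra.
Set Implicit Arguments. Unset Strict Implicit. Unset Printing Implicit Defensive.
Import Order.TTheory GRing.Theory Num.Theory.
Local Open Scope ring_scope.

Section Defs.
Variables (R : rcfType) (N : nat).

Definition ones : 'cV[R]_N := const_mx 1.

Definition ipmu (mu : 'cV[R]_N) (M M' : 'M[R]_N) : R :=
  \tr (M *m diag_mx (mu^T) *m M'^T).

Definition nmu2 (mu : 'cV[R]_N) (M : 'M[R]_N) : R := ipmu mu M M.

Definition eucl2 (mu : 'cV[R]_N) : R := \sum_i mu i 0 ^+ 2.

Definition mu1T (mu : 'cV[R]_N) : 'M[R]_N := mu *m ones^T.

Definition stoch_fix (mu : 'cV[R]_N) (P : 'M[R]_N) : Prop :=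
  (forall i j, 0 <= P i j) /\ (forall j, \sum_i P i j = 1) /\ P *m mu = mu.

Definition KP (mu : 'cV[R]_N) (P : 'M[R]_N) : R := nmu2 mu P - eucl2 mu.

Definition alphaV (mu : 'cV[R]_N) (P V : 'M[R]_N) : R :=
  (ipmu mu V P - eucl2 mu) / KP mu P.

Definition DeltaV (mu : 'cV[R]_N) (P V : 'M[R]_N) : 'M[R]_N :=
  V - alphaV mu P V *: P - (1 - alphaV mu P V) *: mu1T mu.

End Defs.

(* Main.v *)
Require Import Defs.
From mathcomp Require Import all_boot all_order all_algebra.
From mathcomp Require Import ring lra.
Import Order.TTheory GRing.Theory Num.Theory.
Local Open Scope ring_scope.

Section H.
Variables (R : rcfType) (N : nat) (mu : 'cV[R]_N).

Lemma ipmuDl (A B M : 'M[R]_N) : ipmu mu (A + B) M = ipmu mu A M + ipmu mu B M.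
Proof. by rewrite /ipmu !mulmxDl mxtraceD. Qed.

Lemma ipmuZl a (A M : 'M[R]_N) : ipmu mu (a *: A) M = a * ipmu mu A M.
Proof. by rewrite /ipmu -!scalemxAl mxtraceZ. Qed.

Lemma ipmuC (A B : 'M[R]_N) : ipmu mu A B = ipmu mu B A.
Proof. by rewrite /ipmu -mxtrace_tr !trmx_mul trmxK tr_diag_mx mulmxA. Qed.

Lemma ipmuDr (A B M : 'M[R]_N) : ipmu mu M (A + B) = ipmu mu M A + ipmu mu M B.
Proof. by rewrite ipmuC ipmuDl ipmuC [ipmu _ B _]ipmuC. Qed.

Lemma ipmuZr a (A M : 'M[R]_N) : ipmu mu M (a *: A) = a * ipmu mu M A.
Proof. by rewrite ipmuC ipmuZl ipmuC. Qed.

Lemma ipmu_sum (A B : 'M[R]_N) :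
  ipmu mu A B = \sum_i \sum_j A i j * mu j 0 * B i j.
Proof.
rewrite /ipmu /mxtrace; apply: eq_bigr => i _; rewrite mul_mx_diag !mxE.
by apply: eq_bigr => j _; rewrite !mxE.
Qed.

Lemma mu1TE i j : mu1T mu i j = mu i 0.
Proof. by rewrite /mu1T !mxE big_ord1 !mxE mulr1. Qed.

Lemma ipmu_ge0 (A : 'M[R]_N) : (forall k, 0 <= mu k 0) -> 0 <= ipmu mu A A.
Proof.
move=> h; rewrite ipmu_sum; apply: sumr_ge0 => i _; apply: sumr_ge0 => j _.
by rewrite mulrAC -expr2 mulr_ge0 ?sqr_ge0.
Qed.

Lemma ipmu_fix (P : 'M[R]_N) : P *m mu = mu -> ipmu mu P (mu1T mu) = eucl2 mu.
Proof.
move=> hP; rewrite ipmu_sum /eucl2; apply: eq_bigr => i _.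
under eq_bigr => j _ do rewrite mu1TE.
rewrite -mulr_suml.
have -> : \sum_j P i j * mu j 0 = mu i 0.
  by rewrite -{2}hP !mxE.
by rewrite expr2.
Qed.

Lemma ipmu_UU : \sum_k mu k 0 = 1 -> ipmu mu (mu1T mu) (mu1T mu) = eucl2 mu.
Proof.
move=> hs; rewrite ipmu_sum /eucl2; apply: eq_bigr => i _.
under eq_bigr => j _ do rewrite !mu1TE mulrAC.
by rewrite -mulr_sumr hs mulr1 expr2.
Qed.

End H.

Theorem lemmaH1 (R : rcfType) (C C' : R) (hC : 1 <= C) (hC' : 0 < C') :
  exists c1 c2 c3 : R, [/\ 0 < c1, 0 < c2 & 0 < c3] /\
  forall (N : nat) (mu : 'cV[R]_N) (P Ph : 'M[R]_N) (c' theta : R),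
    \sum_k mu k 0 = 1 ->
    (forall k, 1 / (C * N%:R) <= mu k 0 <= C / N%:R) ->
    stoch_fix mu P ->
    nmu2 mu P - eucl2 mu >= eucl2 mu ->
    stoch_fix mu Ph ->
    ipmu mu Ph P >= 2 * eucl2 mu ->
    0 < c' -> c' <= C' ->
    c' * nmu2 mu P <= nmu2 mu Ph -> nmu2 mu Ph <= C' * nmu2 mu P ->
    0 < theta < 1 ->
    let V := theta *: Ph + (1 - theta) *: mu1T mu in
    c1 * (theta / (N%:R * KP mu P)) <= alphaV mu P V <= c2 * theta /\
    nmu2 mu (DeltaV mu P V) <= c3 * theta ^+ 2 * KP mu P.
Proof.
have C0 : 0 < C by lra.
exists (1 / C), (C' + 1), (2 * C'); split.
  by split; [rewrite divr_gt0 | lra | lra].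
move=> N mu P Ph c' th hs hb [_ [_ hP]] hK [_ [_ hPh]] hx hc' hcC hl hu /andP[th0 th1] V.
have hN : (0 < N)%N.
  case: N mu P Ph hs {hb hP hK hPh hx hl hu V} => // mu P Ph; rewrite big_ord0 => /eqP; by rewrite eq_sym oner_eq0.
have N0 : 0 < (N%:R : R) by rewrite ltr0n.
have lb0 : 0 < 1 / (C * N%:R) by rewrite divr_gt0 // mulr_gt0.
have hmu : forall k, 0 <= mu k 0 by move=> k; case/andP: (hb k) => h _; exact: le_trans (ltW lb0) h.
set U := mu1T mu.
set e := eucl2 mu. set p := nmu2 mu P. set h := nmu2 mu Ph. set x := ipmu mu Ph P.
move: hK hx hl hu; rewrite -/e -/p -/h -/x => hK hx hl hu.
have he : 1 / (C * N%:R) <= e.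
  have : \sum_k mu k 0 * (1 / (C * N%:R)) <= e.
    rewrite /e /eucl2; apply: ler_sum => k _.
    rewrite expr2; apply: ler_wpM2l => //; by case/andP: (hb k).
  by rewrite -mulr_suml hs mul1r.
have e0 : 0 < e by lra.
have hPU : ipmu mu P U = e by exact: ipmu_fix.
have hUP : ipmu mu U P = e by rewrite ipmuC.
have hPhU : ipmu mu Ph U = e by exact: ipmu_fix.
have hUPh : ipmu mu U Ph = e by rewrite ipmuC.
have hUU : ipmu mu U U = e by exact: ipmu_UU.
have hPPh : ipmu mu P Ph = x by rewrite ipmuC.
have hxb : 2 * x <= h + p.
  have := @ipmu_ge0 R N mu (Ph + (-1) *: P) hmu.
  rewrite !ipmuDl !ipmuDr !ipmuZl !ipmuZr -/h -/p -/x hPPh; lra.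
set K := KP mu P.
have hKe : K = p - e by [].
have K0 : 0 < K by rewrite hKe; lra.
set a := alphaV mu P V.
have hVP : ipmu mu V P = th * x + (1 - th) * e.
  by rewrite /V ipmuDl !ipmuZl hUP.
have ha : a = th * (x - e) / K.
  rewrite /a /alphaV hVP -/K -/e; congr (_ / _); ring.
have haK : a * K = th * (x - e).
  by rewrite ha -mulrA mulVf ?mulr1 // gt_eqF.
have a0 : 0 <= a by rewrite ha divr_ge0 ?(ltW K0) //; apply: mulr_ge0; lra.
split; [apply/andP; split|].
- have -> : 1 / C * (th / (N%:R * K)) = th * (1 / (C * N%:R)) / K.
    field; apply/and3P; split; rewrite gt_eqF //.
  rewrite ha ler_pM2r ?invr_gt0 //; apply: ler_wpM2l; lra.
- rewrite ha ler_pdivrMr //.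
  have : x - e <= (C' + 1) * K.
    have : h <= C' * p by [].
    rewrite hKe => hh; nra.
  move=> hh; nra.
- have hD : DeltaV mu P V = th *: Ph + (- a) *: P + (a - th) *: U.
    apply/matrixP => i j; rewrite /DeltaV -/a /V !mxE; ring.
  rewrite /nmu2 hD !ipmuDl !ipmuDr !ipmuZl !ipmuZr -/h -/p -/x hPPh hPU hUP hPhU hUPh hUU.
  have hh : h <= C' * p by [].
  have step : th ^+ 2 * h + a ^+ 2 * p + (a - th) ^+ 2 * e - 2 * th * a * x
      + 2 * th * (a - th) * e - 2 * a * (a - th) * e
      = th ^+ 2 * (h - e) - th * (a * (x - e)).
    have : a * (a * K) = a * (th * (x - e)) by rewrite haK.
    rewrite hKe => E; nra.
  have hax : 0 <= th * (a * (x - e)) by apply: mulr_ge0; [lra | apply: mulr_ge0; lra].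
  have hf1 : h - e <= 2 * C' * K by rewrite hKe; nra.
  have hf : th ^+ 2 * (h - e) <= th ^+ 2 * (2 * C' * K) by apply: ler_wpM2l; [exact: sqr_ge0|].
  have -> : 2 * C' * th ^+ 2 * K = th ^+ 2 * (2 * C' * K) by ring.
  rewrite (_ : ipmu mu Ph Ph = h) // (_ : ipmu mu P P = p) //; lra.
Qed.
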